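(* Let $\lambda\ge0$, $n\ge0$ an integer and $x\in[-1,1]$. Then $$I^\lambda_+C^{\lambda+1/2}_n(x)=c_{n,\lambda}\frac{\lambda+\frac12}{\lambda+n+\frac12}(1+x)\,{}_2F_1\!\Big(-n,\,n+2\lambda+1;\,\lambda+\tfrac12;\,\tfrac{1-x}2\Big),$$ $$I^\lambda_-C^{\lambda+1/2}_n(x)=c_{n,\lambda}(1-x)\,{}_2F_1\!\Big(-n,\,n+2\lambda+1;\,\lambda+\tfrac32;\,\tfrac{1-x}2\Big),$$ where $c_{n,\lambda}=\frac{\sqrt\pi(2\lambda+1)_n}{n!}\frac{\Gamma(\lambda+1)}{\Gamma(\lambda+\frac32)}$.
   Context: $C^\mu_n$ are Gegenbauer polynomials with generating function $(1-2xr+r^2)^{-\mu}$; ${}_2F_1$ is the Gauss hypergeometric function (terminating here) and $(a)_k$ the Pochhammer symbol. For $f\in L^1[-1,1]$ and $\lambda\ge0$: $I^\lambda_+f(x)=(1+x)^{-\lambda+1/2}\int_{-1}^x(x-\tau)^{-1/2}(1+\tau)^\lambda f(\tau)\,d\tau$, $I^\lambda_-f(x)=(1-x)^{-\lambda+1/2}\int_x^1(\tau-x)^{-1/2}(1-\tau)^\lambda f(\tau)\,d\tau$. *)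

(* Defs.v *)
From Stdlib Require Import Reals Lra Lia Arith ClassicalEpsilon.
Open Scope R_scope.

Fixpoint poch (a : R) (k : nat) : R :=
  match k with
  | O => 1
  | S k' => poch a k' * (a + INR k')
  end.

(* Power x^a for x >= 0, with the convention 0^a = 0 for a <> 0, 0^0 = 1. *)
Definition rpow (x a : R) : R :=
  if Req_EM_T x 0 then (if Req_EM_T a 0 then 1 else 0) else Rpower x a.

(* Gegenbauer polynomial C^mu_n(x): coefficient of r^n in (1-2xr+r^2)^(-mu),
   i.e. sum_{k <= n/2} (-1)^k (mu)_{n-k} / (k! (n-2k)!) (2x)^(n-2k). *)
Definition gegenbauer (mu : R) (n : nat) (x : R) : R :=
  sum_f_R0 (fun k => (-1) ^ k * poch mu (n - k)
                       / (INR (Factorial.fact k) * INR (Factorial.fact (n - 2 * k))) * (2 * x) ^ (n - 2 * k))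
           (Nat.div2 n).

(* Terminating hypergeometric series: sum_{k=0}^{m} (a)_k (b)_k / ((c)_k k!) z^k.
   Used with a = -m, so this is the full 2F1. *)
Definition hyp2F1_term (a b c z : R) (m : nat) : R :=
  sum_f_R0 (fun k => poch a k * poch b k / (poch c k * INR (Factorial.fact k)) * z ^ k) m.

(* Euler's limit definition of the Gamma function:
   Gamma z = lim_n n! n^z / (z (z+1) ... (z+n)). *)
Definition gamma_seq (z : R) (n : nat) : R :=
  INR (Factorial.fact n) * Rpower (INR n) z / poch z (S n).

Definition Gamma (z : R) : R :=
  epsilon (inhabits 0) (fun l => Un_cv (gamma_seq z) l).

Definition is_RInt (f : R -> R) (a b v : R) : Prop :=
  exists pr : Riemann_integrable f a b, RiemannInt pr = v.

(* Improper integral over [a,b], possibly singular at the right end b: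
   l = lim_{c -> b^-} int_a^c f ; value 0 when a = b. *)
Definition imp_int_right (f : R -> R) (a b l : R) : Prop :=
  (a = b /\ l = 0) \/
  (a < b /\ forall eps, 0 < eps -> exists delta, 0 < delta /\
     forall c, a <= c -> b - delta < c < b ->
       exists v, is_RInt f a c v /\ Rabs (v - l) < eps).

(* Improper integral over [a,b], possibly singular at the left end a. *)
Definition imp_int_left (f : R -> R) (a b l : R) : Prop :=
  (a = b /\ l = 0) \/
  (a < b /\ forall eps, 0 < eps -> exists delta, 0 < delta /\
     forall c, c <= b -> a < c < a + delta ->
       exists v, is_RInt f c b v /\ Rabs (v - l) < eps).

Definition Iplus (lam : R) (f : R -> R) (x v : R) : Prop :=
  exists l, imp_int_right (fun t => / sqrt (x - t) * rpow (1 + t) lam * f t) (-1) x l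
            /\ rpow (1 + x) (- lam + 1/2) * l = v.

Definition Iminus (lam : R) (f : R -> R) (x v : R) : Prop :=
  exists l, imp_int_left (fun t => / sqrt (t - x) * rpow (1 - t) lam * f t) x 1 l
            /\ rpow (1 - x) (- lam + 1/2) * l = v.

Definition c_const (n : nat) (lam : R) : R :=
  sqrt PI * poch (2 * lam + 1) n / INR (Factorial.fact n) * (Gamma (lam + 1) / Gamma (lam + 3/2)).

(* Main.v *)
Require Import Defs.
From Stdlib Require Import Reals Lra Lia ClassicalEpsilon FunctionalExtensionality.
From Coquelicot Require Import Coquelicot.
Open Scope R_scope.

Lemma poch_S_r (a : R) (k : nat) : poch a (S k) = poch a k * (a + INR k).
Proof. reflexivity. Qed.

Lemma poch_S_l (a : R) (k : nat) : poch a (S k) = a * poch (a + 1) k.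
Proof.
  revert a; induction k as [|k IH]; intros a.
  - simpl. ring.
  - rewrite (poch_S_r a (S k)), IH, (poch_S_r (a+1) k), S_INR. ring.
Qed.



Lemma poch_neg_zero (n k : nat) : (n < k)%nat -> poch (- INR n) k = 0.
Proof.
  induction k as [|k IH]; intros H; [lia|].
  rewrite poch_S_r.
  destruct (Nat.eq_dec n k) as [->|Hne].
  - replace (- INR k + INR k) with 0 by ring. ring.
  - rewrite IH by lia. ring.
Qed.

Lemma poch_pos (a : R) (k : nat) : 0 < a -> 0 < poch a k.
Proof.
  intros Ha; induction k as [|k IH]; simpl; [lra|].
  apply Rmult_lt_0_compat; [exact IH|]. pose proof (pos_INR k); lra.
Qed.

Lemma poch_nz (a : R) (k : nat) : 0 < a -> poch a k <> 0.
Proof. intros H; pose proof (poch_pos a k H); lra. Qed.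

Lemma fact_nz (k : nat) : INR (Factorial.fact k) <> 0.
Proof. apply INR_fact_neq_0. Qed.

Lemma fact_S (k : nat) : INR (Factorial.fact (S k)) = INR (S k) * INR (Factorial.fact k).
Proof. rewrite <- mult_INR. reflexivity. Qed.

Lemma poch_rev (d : R) (n : nat) : poch (1 - d - INR n) n = (-1) ^ n * poch d n.
Proof.
  induction n as [|n IH]; [simpl; ring|].
  rewrite poch_S_l.
  replace (1 - d - INR (S n) + 1) with (1 - d - INR n) by (rewrite S_INR; ring).
  rewrite IH. rewrite poch_S_r. rewrite S_INR. simpl. ring.
Qed.

Definition Fco (a b c : R) (k : nat) : R :=
  poch a k * poch b k / (poch c k * INR (Factorial.fact k)).

Lemma hyp_Fco a b c z N :
  hyp2F1_term a b c z N = sum_f_R0 (fun k => Fco a b c k * z ^ k) N.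
Proof. reflexivity. Qed.

Lemma hyp_at0 a b c N : hyp2F1_term a b c 0 N = 1.
Proof.
  induction N as [|N IH].
  - unfold hyp2F1_term; simpl. field.
  - unfold hyp2F1_term in *. rewrite tech5, IH. simpl. ring.
Qed.

Lemma hyp_deriv (a b c z : R) (m : nat) : 0 < c ->
  is_derive (fun z => hyp2F1_term a b c z (S m)) z
    (a * b / c * hyp2F1_term (a + 1) (b + 1) (c + 1) z m).
Proof.
  intros Hc. apply is_derive_Reals.
  pose proof (derivable_pt_lim_fs (Fco a b c) z (S m) ltac:(lia)) as H.
  simpl Init.Nat.pred in H.
  replace (a * b / c * hyp2F1_term (a + 1) (b + 1) (c + 1) z m) with
    (sum_f_R0 (fun k : nat => INR (S k) * Fco a b c (S k) * z ^ k) m); [exact H|].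
  unfold hyp2F1_term. rewrite scal_sum. apply sum_eq. intros k _.
  unfold Fco. rewrite !poch_S_l, fact_S.
  pose proof (poch_nz (c+1) k ltac:(lra)).
  pose proof (fact_nz k). pose proof (pos_INR k). rewrite S_INR.
  field. repeat split; lra.
Qed.
Definition gT (mu : R) (n k : nat) (t : R) : R :=
  if Nat.leb (2 * k) n then
    (-1) ^ k * poch mu (n - k) / (INR (Factorial.fact k) * INR (Factorial.fact (n - 2 * k))) * (2 * t) ^ (n - 2 * k)
  else 0.

Lemma div2_bounds (n : nat) : (2 * Nat.div2 n <= n /\ n < 2 * Nat.div2 n + 2)%nat.
Proof. pose proof (Nat.div2_odd n). destruct (Nat.odd n); simpl in H; lia. Qed.

Lemma geg_sum (mu : R) (n N : nat) (t : R) : (Nat.div2 n <= N)%nat ->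
  gegenbauer mu n t = sum_f_R0 (fun k => gT mu n k t) N.
Proof.
  intros H. pose proof (div2_bounds n).
  induction H as [|N HN IH].
  - unfold gegenbauer. apply sum_eq. intros i Hi. unfold gT.
    replace (Nat.leb (2 * i) n) with true; [reflexivity|].
    symmetry; apply Nat.leb_le; lia.
  - rewrite tech5, <- IH. unfold gT.
    replace (Nat.leb (2 * S N) n) with false; [ring|].
    symmetry; apply Nat.leb_gt; lia.
Qed.

Lemma sum_shift0 (f : nat -> R) (M : nat) :
  sum_f_R0 (fun k => match k with O => 0 | S j => f j end) (S M) = sum_f_R0 f M.
Proof.
  induction M as [|M IH].
  - simpl. ring.
  - rewrite tech5, IH. rewrite tech5. reflexivity.
Qed.

Lemma gT_rec (mu : R) (m k : nat) :
  INR (S (S m)) * gT mu (S (S m)) k 1 =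
  2 * mu * (gT (mu + 1) (S m) k 1 - match k with O => 0 | S j => gT (mu + 1) m j 1 end).
Proof.
  unfold gT. destruct k as [|j].
  - simpl Nat.leb. cbv iota.
    replace (S (S m) - 0)%nat with (S (S m)) by lia.
    replace (S (S m) - 2 * 0)%nat with (S (S m)) by lia.
    replace (S m - 0)%nat with (S m) by lia.
    replace (S m - 2 * 0)%nat with (S m) by lia.
    rewrite (poch_S_l mu (S m)), (fact_S (S m)).
    pose proof (fact_nz (S m)). simpl Factorial.fact at 1.
    replace (2 * 1) with 2 by ring. simpl pow.
    change (INR (Factorial.fact 0)) with 1. change (INR 1) with 1.
    pose proof (pos_INR (S m)).
    rewrite (S_INR (S m)). field. split; [|lra]. exact H.
  - destruct (Compare_dec.lt_eq_lt_dec m (2 * j)) as [[Hlt|Heq]|Hgt].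
    + replace (Nat.leb (2 * S j) (S (S m))) with false by (symmetry; apply Nat.leb_gt; lia).
      replace (Nat.leb (2 * S j) (S m)) with false by (symmetry; apply Nat.leb_gt; lia).
      replace (Nat.leb (2 * j) m) with false by (symmetry; apply Nat.leb_gt; lia).
      ring.
    + subst m.
      replace (Nat.leb (2 * S j) (S (S (2 * j)))) with true by (symmetry; apply Nat.leb_le; lia).
      replace (Nat.leb (2 * S j) (S (2 * j))) with false by (symmetry; apply Nat.leb_gt; lia).
      replace (Nat.leb (2 * j) (2 * j)) with true by (symmetry; apply Nat.leb_le; lia).
      replace (S (S (2 * j)) - S j)%nat with (S j) by lia.
      replace (S (S (2 * j)) - 2 * S j)%nat with 0%nat by lia.
      replace (2 * j - j)%nat with j by lia.
      replace (2 * j - 2 * j)%nat with 0%nat by lia.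
      rewrite (poch_S_l mu j), (fact_S j).
      pose proof (fact_nz j). pose proof (pos_INR j).
      replace (INR (S (S (2 * j)))) with (2 * INR (S j)) by (rewrite !S_INR, mult_INR; simpl; ring).
      rewrite S_INR. simpl pow. simpl Factorial.fact. simpl INR. field. lra.
    + destruct (Nat.le_exists_sub (S (2 * j)) m ltac:(lia)) as [r [Hr _]].
      subst m.
      replace (Nat.leb (2 * S j) (S (S (r + S (2 * j))))) with true by (symmetry; apply Nat.leb_le; lia).
      replace (Nat.leb (2 * S j) (S (r + S (2 * j)))) with true by (symmetry; apply Nat.leb_le; lia).
      replace (Nat.leb (2 * j) (r + S (2 * j))) with true by (symmetry; apply Nat.leb_le; lia).
      replace (S (S (r + S (2 * j))) - S j)%nat with (S (S (j + r))) by lia.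
      replace (S (S (r + S (2 * j))) - 2 * S j)%nat with (S r) by lia.
      replace (S (r + S (2 * j)) - S j)%nat with (S (j + r)) by lia.
      replace (S (r + S (2 * j)) - 2 * S j)%nat with r by lia.
      replace (r + S (2 * j) - j)%nat with (S (j + r)) by lia.
      replace (r + S (2 * j) - 2 * j)%nat with (S r) by lia.
      rewrite (poch_S_l mu (S (j + r))), (fact_S j), (fact_S r).
      pose proof (fact_nz j). pose proof (fact_nz r). pose proof (pos_INR j). pose proof (pos_INR r).
      replace (INR (S (S (r + S (2 * j))))) with (INR r + 2 * INR j + 3)
        by (rewrite !S_INR, plus_INR, S_INR, mult_INR; simpl; ring).
      rewrite !S_INR. simpl pow.
      field. repeat split; lra.
Qed.
Lemma geg_rec1 (mu : R) (m : nat) :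
  INR (S (S m)) * gegenbauer mu (S (S m)) 1 =
  2 * mu * (gegenbauer (mu + 1) (S m) 1 - gegenbauer (mu + 1) m 1).
Proof.
  pose proof (div2_bounds (S (S m))). pose proof (div2_bounds (S m)). pose proof (div2_bounds m).
  rewrite (geg_sum mu (S (S m)) (S (S m))) by lia.
  rewrite (geg_sum (mu+1) (S m) (S (S m))) by lia.
  rewrite (geg_sum (mu+1) m (S m)) by lia.
  rewrite <- (sum_shift0 (fun k => gT (mu + 1) m k 1) (S m)).
  rewrite scal_sum, <- minus_sum, scal_sum.
  apply sum_eq. intros i _. rewrite Rmult_comm, gT_rec. ring.
Qed.

Lemma geg_at1 (n : nat) : forall mu, gegenbauer mu n 1 = poch (2 * mu) n / INR (Factorial.fact n).
Proof.
  induction n as [n IH] using Wf_nat.lt_wf_ind. intros mu.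
  destruct n as [|[|m]].
  - unfold gegenbauer. simpl. field.
  - unfold gegenbauer. simpl. field.
  - pose proof (geg_rec1 mu m) as Hr.
    rewrite (IH (S m) ltac:(lia)), (IH m ltac:(lia)) in Hr.
    pose proof (pos_INR (S (S m))) as Hp.
    assert (Hnz : INR (S (S m)) <> 0) by (rewrite S_INR; pose proof (pos_INR (S m)); lra).
    apply (Rmult_eq_reg_l (INR (S (S m)))); [|exact Hnz].
    rewrite Hr.
    rewrite (poch_S_l (2*mu) (S m)), (poch_S_l (2*mu+1) m).
    rewrite (poch_S_r (2*(mu+1)) m).
    replace (2 * mu + 1 + 1) with (2 * (mu + 1)) by ring.
    rewrite (fact_S (S m)), (fact_S m).
    pose proof (fact_nz m). pose proof (pos_INR m).
    rewrite !S_INR. field. lra.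
Qed.

Lemma gT_deriv (mu : R) (m k : nat) (t : R) :
  is_derive (gT mu (S m) k) t (2 * mu * gT (mu + 1) m k t).
Proof.
  unfold gT.
  destruct (Compare_dec.le_lt_dec (2 * k) m) as [Hlt|Hgt0];
  [|destruct (Nat.eq_dec (2 * k) (S m)) as [Heq|Hgt]].
  - replace (Nat.leb (2 * k) (S m)) with true by (symmetry; apply Nat.leb_le; lia).
    replace (Nat.leb (2 * k) m) with true by (symmetry; apply Nat.leb_le; lia).
    replace (S m - k)%nat with (S (m - k)) by lia.
    replace (S m - 2 * k)%nat with (S (m - 2 * k)) by lia.
    rewrite (poch_S_l mu (m - k)), (fact_S (m - 2 * k)).
    set (j := (m - 2 * k)%nat).
    set (P := poch (mu + 1) (m - k)).
    pose proof (fact_nz k). pose proof (fact_nz j). pose proof (pos_INR j).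
    auto_derive; [exact I|].
    clearbody j.
    replace (match j with 0%nat => 1 | S _ => INR j + 1 end) with (INR j + 1)
      by (destruct j; simpl; ring).
    field. repeat split; try assumption; lra.
  - replace (Nat.leb (2 * k) (S m)) with true by (symmetry; apply Nat.leb_le; lia).
    replace (Nat.leb (2 * k) m) with false by (symmetry; apply Nat.leb_gt; lia).
    replace (S m - 2 * k)%nat with 0%nat by lia. simpl pow.
    replace (2 * mu * 0) with 0 by ring.
    auto_derive; [exact I|ring].
  - replace (Nat.leb (2 * k) (S m)) with false by (symmetry; apply Nat.leb_gt; lia).
    replace (Nat.leb (2 * k) m) with false by (symmetry; apply Nat.leb_gt; lia).
    replace (2 * mu * 0) with 0 by ring.
    auto_derive; [exact I|ring].
Qed.

Lemma sum_deriv (f : nat -> R -> R) (f' : nat -> R) (N : nat) (t : R) :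
  (forall k, (k <= N)%nat -> is_derive (f k) t (f' k)) ->
  is_derive (fun t => sum_f_R0 (fun k => f k t) N) t (sum_f_R0 f' N).
Proof.
  induction N as [|N IH]; intros H.
  - simpl. apply H. lia.
  - simpl. apply (is_derive_plus (fun t => sum_f_R0 (fun k => f k t) N) (f (S N))).
    + apply IH. intros; apply H; lia.
    + apply H; lia.
Qed.

Lemma geg_deriv (mu : R) (m : nat) (t : R) :
  is_derive (gegenbauer mu (S m)) t (2 * mu * gegenbauer (mu + 1) m t).
Proof.
  pose proof (div2_bounds (S m)). pose proof (div2_bounds m).
  apply (is_derive_ext (fun t => sum_f_R0 (fun k => gT mu (S m) k t) (S m))).
  { intros s. symmetry. apply geg_sum. lia. }
  rewrite (geg_sum (mu + 1) m (S m) t) by lia.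
  rewrite scal_sum.
  replace (sum_f_R0 (fun i : nat => gT (mu + 1) m i t * (2 * mu)) (S m))
    with (sum_f_R0 (fun i : nat => 2 * mu * gT (mu + 1) m i t) (S m))
    by (apply sum_eq; intros; ring).
  apply sum_deriv. intros k _. apply gT_deriv.
Qed.

Lemma deriv0_const (h : R -> R) : (forall t, is_derive h t 0) -> forall a b, h a = h b.
Proof.
  intros H.
  assert (pr : derivable h).
  { intros t. exists 0. apply is_derive_Reals. apply H. }
  assert (Hc : constant h).
  { apply (null_derivative_1 h pr). intros t.
    apply derive_pt_eq_0. apply is_derive_Reals. apply H. }
  intros a b. apply Hc.
Qed.
Lemma hyp_deriv_lin (a b c p q : R) (m : nat) (t : R) : 0 < c ->
  is_derive (fun t => hyp2F1_term a b c (p * t + q) (S m)) t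
    (p * (a * b / c * hyp2F1_term (a + 1) (b + 1) (c + 1) (p * t + q) m)).
Proof.
  intros Hc.
  apply (is_derive_comp (fun z => hyp2F1_term a b c z (S m)) (fun t => p * t + q)).
  - apply hyp_deriv; exact Hc.
  - auto_derive; [exact I|ring].
Qed.

Lemma geg_hyp (n : nat) : forall mu t, 0 < mu ->
  gegenbauer mu n t = poch (2 * mu) n / INR (Factorial.fact n) *
    hyp2F1_term (- INR n) (INR n + 2 * mu) (mu + 1/2) ((1 - t) / 2) n.
Proof.
  induction n as [|m IH]; intros mu t Hmu.
  - unfold gegenbauer, hyp2F1_term. simpl. field.
  - set (d := poch (2 * mu) (S m) / INR (Factorial.fact (S m))).
    set (h := fun t => gegenbauer mu (S m) t -
       d * hyp2F1_term (- INR (S m)) (INR (S m) + 2 * mu) (mu + 1 / 2) (-1/2 * t + 1/2) (S m)).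
    assert (Hd : forall t, is_derive h t 0).
    { intros s. unfold h.
      eapply is_derive_ext.
      { intros u. reflexivity. }
      evar (D : R).
      replace 0 with D; [apply (is_derive_minus (gegenbauer mu (S m))); [apply geg_deriv|];
        apply (is_derive_scal (fun t => hyp2F1_term _ _ _ (-1/2 * t + 1/2) (S m)));
        apply hyp_deriv_lin; lra|].
      unfold D; clear D.
      rewrite (IH (mu + 1) s ltac:(lra)).
      replace (- INR (S m) + 1) with (- INR m) by (rewrite S_INR; ring).
      replace (INR (S m) + 2 * mu + 1) with (INR m + 2 * (mu + 1)) by (rewrite S_INR; ring).
      replace (mu + 1 / 2 + 1) with (mu + 1 + 1 / 2) by ring.
      replace (-1/2 * s + 1/2) with ((1 - s) / 2) by field.
      set (Fm := hyp2F1_term (- INR m) (INR m + 2 * (mu + 1)) (mu + 1 + 1 / 2) ((1 - s) / 2) m).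
      unfold d. rewrite (poch_S_l (2 * mu) m).
      pose proof (poch_S_l (2 * mu + 1) m) as E1. rewrite poch_S_r in E1.
      replace (2 * mu + 1 + 1) with (2 * (mu + 1)) in E1 by ring.
      assert (E2 : poch (2 * (mu + 1)) m = poch (2 * mu + 1) m * (2 * mu + 1 + INR m) / (2 * mu + 1))
        by (rewrite E1; field; lra).
      rewrite E2, fact_S.
      pose proof (fact_nz m). pose proof (pos_INR m).
      rewrite !S_INR.
      unfold minus, plus, opp, scal; simpl. unfold mult; simpl.
      field. repeat split; try assumption; lra. }
    intros. 
    assert (Ht : gegenbauer mu (S m) t - d * hyp2F1_term (- INR (S m)) (INR (S m) + 2 * mu) (mu + 1 / 2) ((1 - t) / 2) (S m) = 0).
    { replace ((1 - t) / 2) with (-1/2 * t + 1/2) by field.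
      change (h t = 0). rewrite (deriv0_const h Hd t 1). unfold h.
      replace (-1/2 * 1 + 1/2) with 0 by field. rewrite hyp_at0, geg_at1. unfold d. ring. }
    unfold d in Ht. apply Rminus_diag_uniq in Ht. exact Ht.
Qed.

Lemma geg_neg (mu : R) (n : nat) (t : R) :
  gegenbauer mu n (- t) = (-1) ^ n * gegenbauer mu n t.
Proof.
  unfold gegenbauer. rewrite scal_sum. apply sum_eq. intros i Hi.
  pose proof (div2_bounds n).
  replace (2 * - t) with (-1 * (2 * t)) by ring.
  rewrite Rpow_mult_distr.
  assert (E : (-1) ^ n = (-1) ^ (n - 2 * i) * (-1) ^ (2 * i)).
  { rewrite <- pow_add. f_equal. lia. }
  rewrite pow_1_even in E. rewrite E. ring.
Qed.

Lemma hyp_pascal (n : nat) (b c : R) : 0 < c ->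
  hyp2F1_term (- INR (S n)) b c 1 (S n) =
  hyp2F1_term (- INR n) b c 1 n - b / c * hyp2F1_term (- INR n) (b + 1) (c + 1) 1 n.
Proof.
  intros Hc. unfold hyp2F1_term.
  rewrite (sum_eq _ (fun k => poch (- INR n) k * poch b k / (poch c k * INR (Factorial.fact k)) * 1 ^ k -
     match k with O => 0 | S j => b / c * (poch (- INR n) j * poch (b + 1) j / (poch (c + 1) j * INR (Factorial.fact j)) * 1 ^ j) end)).
  2:{ intros k _. destruct k as [|j].
      - simpl. field.
      - rewrite (poch_S_l (- INR (S n)) j), (poch_S_r (- INR n) j), (poch_S_l b j), (poch_S_l c j), fact_S.
        replace (- INR (S n) + 1) with (- INR n) by (rewrite S_INR; ring).
        pose proof (poch_nz (c + 1) j ltac:(lra)). pose proof (fact_nz j). pose proof (pos_INR j).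
        rewrite !pow1, !S_INR. field. repeat split; try assumption; lra. }
  rewrite minus_sum, sum_shift0, tech5.
  rewrite (poch_neg_zero n (S n)) by lia.
  rewrite scal_sum. 
  replace (sum_f_R0 (fun i : nat => poch (- INR n) i * poch (b + 1) i / (poch (c + 1) i * INR (Factorial.fact i)) * 1 ^ i * (b / c)) n)
    with (sum_f_R0 (fun j : nat => b / c * (poch (- INR n) j * poch (b + 1) j / (poch (c + 1) j * INR (Factorial.fact j)) * 1 ^ j)) n)
    by (apply sum_eq; intros; ring).
  replace (0 * poch b (S n) / (poch c (S n) * INR (Factorial.fact (S n))) * 1 ^ S n) with 0 by (unfold Rdiv; ring).
  rewrite Rplus_0_r. reflexivity.
Qed.

Lemma hyp_CV (n : nat) : forall b c, 0 < c ->
  hyp2F1_term (- INR n) b c 1 n = poch (c - b) n / poch c n.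
Proof.
  induction n as [|n IH]; intros b c Hc.
  - unfold hyp2F1_term. simpl. field.
  - rewrite hyp_pascal by exact Hc.
    rewrite (IH b c Hc), (IH (b + 1) (c + 1) ltac:(lra)).
    replace (c + 1 - (b + 1)) with (c - b) by ring.
    pose proof (poch_S_l c n) as E. rewrite poch_S_r in E.
    rewrite (poch_S_r (c - b) n), (poch_S_r c n).
    pose proof (poch_nz c n Hc). pose proof (poch_nz (c + 1) n ltac:(lra)). pose proof (pos_INR n).
    assert (E2 : poch (c + 1) n = poch c n * (c + INR n) / c) by (rewrite E; field; lra).
    rewrite E2. field. repeat split; try assumption; lra.
Qed.
Lemma m1sq (k : nat) (A B : R) : (-1) ^ k * ((-1) ^ k * A / B) = A / B.
Proof.
  assert (H : (-1) ^ k * (-1) ^ k = 1).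
  { rewrite <- pow_add. replace (k + k)%nat with (2 * k)%nat by lia. apply pow_1_even. }
  transitivity (((-1) ^ k * (-1) ^ k) * A / B); [unfold Rdiv; ring|]. rewrite H. unfold Rdiv; ring.
Qed.

Lemma minus_R (x y : R) : minus x y = x - y.
Proof. reflexivity. Qed.

Lemma hyp_refl (n : nat) : forall lam y, 0 <= lam ->
  (-1) ^ n * hyp2F1_term (- INR n) (INR n + 2 * lam + 1) (lam + 3/2) (1 - y) n =
  (lam + 1/2) / (lam + INR n + 1/2) * hyp2F1_term (- INR n) (INR n + 2 * lam + 1) (lam + 1/2) y n.
Proof.
  induction n as [|m IH]; intros lam y Hl.
  - unfold hyp2F1_term. simpl. field. lra.
  - set (a := - INR (S m)). set (b := INR (S m) + 2 * lam + 1).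
    set (h := fun y => (-1) ^ S m * hyp2F1_term a b (lam + 3/2) (-1 * y + 1) (S m) -
       (lam + 1/2) / (lam + INR (S m) + 1/2) * hyp2F1_term a b (lam + 1/2) (1 * y + 0) (S m)).
    assert (Hd : forall y : R, is_derive h y 0).
    { intros s.
      pose proof (hyp_deriv_lin a b (lam + 3/2) (-1) 1 m s ltac:(lra)) as HP.
      pose proof (hyp_deriv_lin a b (lam + 1/2) 1 0 m s ltac:(lra)) as HQ.
      pose proof (is_derive_scal _ s ((-1)^ S m) _ HP) as HP2.
      pose proof (is_derive_scal _ s ((lam + 1/2) / (lam + INR (S m) + 1/2)) _ HQ) as HQ2.
      pose proof (is_derive_minus _ _ s _ _ HP2 HQ2) as H3.
      match type of H3 with is_derive _ _ ?v => assert (Ev : @eq R v 0); [ | rewrite Ev in H3; exact H3 ] end.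
      clear HP HQ HP2 HQ2 H3.
      unfold a, b.
      replace (- INR (S m) + 1) with (- INR m) by (rewrite S_INR; ring).
      replace (INR (S m) + 2 * lam + 1 + 1) with (INR m + 2 * (lam + 1) + 1) by (rewrite S_INR; ring).
      replace (lam + 3/2 + 1) with (lam + 1 + 3/2) by ring.
      replace (lam + 1/2 + 1) with (lam + 1 + 1/2) by ring.
      replace (-1 * s + 1) with (1 - s) by ring.
      replace (1 * s + 0) with s by ring.
      pose proof (IH (lam + 1) s ltac:(lra)) as E.
      set (G := hyp2F1_term (- INR m) (INR m + 2 * (lam + 1) + 1) (lam + 1 + 3 / 2) (1 - s) m) in *.
      set (E' := hyp2F1_term (- INR m) (INR m + 2 * (lam + 1) + 1) (lam + 1 + 1 / 2) s m) in *.
      assert (EG : (-1) ^ m * G = (lam + 1 + 1 / 2) / (lam + 1 + INR m + 1 / 2) * E') by exact E.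
      pose proof (pos_INR m).
      assert (EG2 : (-1) ^ S m * G = - ((lam + 1 + 1 / 2) / (lam + 1 + INR m + 1 / 2) * E'))
        by (simpl pow; rewrite <- EG; ring).
      rewrite minus_R.
      replace ((-1) ^ S m * (-1 * (- INR (S m) * (INR (S m) + 2 * lam + 1) / (lam + 3 / 2) * G)))
        with (INR (S m) * (INR (S m) + 2 * lam + 1) / (lam + 3 / 2) * ((-1) ^ S m * G)) by (field; lra).
      rewrite EG2. rewrite !S_INR. field. repeat split; lra. }
    intros.
    replace (1 - y) with (-1 * y + 1) by ring.
    apply Rminus_diag_uniq.
    replace (hyp2F1_term a b (lam + 1/2) y (S m)) with (hyp2F1_term a b (lam + 1/2) (1 * y + 0) (S m)) by (f_equal; ring). change (h y = 0).
    rewrite (deriv0_const h Hd y 0). unfold h.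
    replace (-1 * 0 + 1) with 1 by ring. replace (1 * 0 + 0) with 0 by ring.
    rewrite hyp_at0. unfold a. rewrite hyp_CV by lra. unfold b.
    replace (lam + 3 / 2 - (INR (S m) + 2 * lam + 1)) with (1 - (lam + 1/2) - INR (S m)) by field.
    rewrite poch_rev.
    rewrite (poch_S_l (lam + 1/2) m), (poch_S_r (lam + 3/2) m).
    replace (lam + 1/2 + 1) with (lam + 3/2) by field.
    pose proof (poch_nz (lam + 3/2) m ltac:(lra)). pose proof (pos_INR m).
    rewrite m1sq.
    rewrite S_INR. field. split; [lra|assumption].
Qed.
Lemma ballR (x e z : R) : ball x e z -> Rabs (z - x) < e.
Proof. intros H. exact H. Qed.

Lemma exp_le_mono (x y : R) : x <= y -> exp x <= exp y.
Proof. intros [H|H]; [left; apply exp_increasing; exact H|right; rewrite H; reflexivity]. Qed.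

Lemma rpow_pos (z a : R) : 0 < z -> rpow z a = Rpower z a.
Proof. intros H. unfold rpow. destruct (Req_EM_T z 0); [lra|reflexivity]. Qed.

Lemma rpow_0 (a : R) : a <> 0 -> rpow 0 a = 0.
Proof. intros H. unfold rpow. destruct (Req_EM_T 0 0); [|lra]. destruct (Req_EM_T a 0); [lra|reflexivity]. Qed.

Lemma rpow_a0 (z : R) : rpow z 0 = 1.
Proof.
  unfold rpow. destruct (Req_EM_T z 0). { destruct (Req_EM_T 0 0); [reflexivity|lra]. }
  unfold Rpower. rewrite Rmult_0_l. apply exp_0.
Qed.

Definition rho (a y : R) : R := rpow (Rmax y 0) a.

Lemma rho_pos (a y : R) : 0 < y -> rho a y = Rpower y a.
Proof. intros H. unfold rho. rewrite Rmax_left by lra. apply rpow_pos; exact H. Qed.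

Lemma rho_nonpos (a y : R) : y <= 0 -> rho a y = rpow 0 a.
Proof. intros H. unfold rho. rewrite Rmax_right by lra. reflexivity. Qed.

Lemma rho_a0 (y : R) : rho 0 y = 1.
Proof. unfold rho. apply rpow_a0. Qed.

Lemma rpow_ge0 (z a : R) : 0 <= z -> 0 <= rpow z a.
Proof.
  intros H. unfold rpow. destruct (Req_EM_T z 0).
  - destruct (Req_EM_T a 0); lra.
  - unfold Rpower. left; apply exp_pos.
Qed.

Lemma rho_ge0 (a y : R) : 0 <= rho a y.
Proof. unfold rho. apply rpow_ge0. apply Rmax_r. Qed.

Lemma rho_le1 (a y : R) : 0 <= a -> y <= 1 -> rho a y <= 1.
Proof.
  intros Ha Hy. destruct (Rle_lt_dec y 0) as [H|H].
  - rewrite rho_nonpos by exact H. unfold rpow. destruct (Req_EM_T 0 0); [|lra].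
    destruct (Req_EM_T a 0); lra.
  - rewrite rho_pos by exact H. unfold Rpower. rewrite <- exp_0. apply exp_le_mono.
    assert (ln y <= 0) by (rewrite <- ln_1; apply ln_le; lra). nra.
Qed.

Lemma rho_mono (a b y : R) : 0 <= a <= b -> y <= 1 -> rho b y <= rho a y.
Proof.
  intros Hab Hy. destruct (Rle_lt_dec y 0) as [H|H].
  - rewrite !rho_nonpos by exact H.
    destruct (Req_EM_T b 0).
    + replace a with 0 by lra. subst b. lra.
    + rewrite rpow_0 by exact n. apply rpow_ge0; lra.
  - rewrite !rho_pos by exact H. unfold Rpower. apply exp_le_mono.
    assert (ln y <= 0) by (rewrite <- ln_1; apply ln_le; lra). nra.
Qed.

Lemma rho_mul_pow (a y : R) (k : nat) : 0 <= a -> 0 <= y -> rho a y * y ^ k = rho (a + INR k) y.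
Proof.
  intros Ha [Hy|Hy].
  - rewrite !rho_pos by exact Hy. rewrite <- (Rpower_pow k y Hy), <- Rpower_plus. reflexivity.
  - subst y. destruct k as [|k].
    + simpl. rewrite Rplus_0_r. ring.
    + rewrite pow_i by lia. rewrite !rho_nonpos by lra. rewrite (rpow_0 (a + INR (S k))).
      * ring.
      * rewrite S_INR. pose proof (pos_INR k). lra.
Qed.

Lemma rho_succ (a y : R) : 0 <= a -> 0 <= y -> rho (a + 1) y = rho a y * y.
Proof.
  intros Ha Hy. pose proof (rho_mul_pow a y 1 Ha Hy) as E. simpl in E.
  rewrite Rmult_1_r in E. rewrite E. reflexivity.
Qed.

Lemma rho_le_y (a y : R) : 0 <= a -> 0 <= y <= 1 -> rho (a + 1) y <= y.
Proof.
  intros Ha Hy. rewrite rho_succ by lra. pose proof (rho_le1 a y Ha ltac:(lra)).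
  pose proof (rho_ge0 a y). nra.
Qed.

Lemma rho_scale (a h y : R) : 0 < h -> 0 <= y -> rho a (h * y) = Rpower h a * rho a y.
Proof.
  intros Hh [Hy|Hy].
  - rewrite !rho_pos by (try apply Rmult_lt_0_compat; lra).
    rewrite Rpower_mult_distr by lra. reflexivity.
  - subst y. rewrite Rmult_0_r. rewrite !rho_nonpos by lra.
    destruct (Req_EM_T a 0).
    + subst a. rewrite rpow_a0, Rpower_O by lra. ring.
    + rewrite rpow_0 by exact n. ring.
Qed.

Lemma rho_half (y : R) : 0 <= y -> rho (1/2) y = sqrt y.
Proof.
  intros [Hy|Hy].
  - rewrite rho_pos by exact Hy. replace (1/2) with (/2) by field. apply Rpower_sqrt; exact Hy.
  - subst y. rewrite rho_nonpos by lra. rewrite rpow_0 by lra. rewrite sqrt_0. reflexivity.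
Qed.

Lemma cont_Rpower (a y : R) : 0 < y -> continuous (fun z => Rpower z a) y.
Proof.
  intros Hy. apply (@ex_derive_continuous R_AbsRing R_NormedModule). exists (a * Rpower y (a - 1)).
  apply is_derive_Reals. apply derivable_pt_lim_power. exact Hy.
Qed.

Lemma rho_cont (a : R) : 0 <= a -> forall y, continuous (rho a) y.
Proof.
  intros Ha y. destruct (Req_EM_T a 0) as [Ha0|Ha0].
  { subst a. apply (continuous_ext (fun _ => 1)); [intros; rewrite rho_a0; reflexivity|].
    apply continuous_const. }
  assert (Hap : 0 < a) by lra.
  destruct (Rtotal_order y 0) as [Hlt|[Heq|Hgt]].
  - apply (continuous_ext_loc (rho a) (fun _ => 0)).
    + assert (Hp : 0 < - y) by lra. exists (mkposreal _ Hp). intros z Hz.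
      apply ballR in Hz. simpl in Hz. rewrite rho_nonpos by (apply Rabs_lt_between in Hz; lra).
      rewrite rpow_0 by exact Ha0. reflexivity.
    + apply continuous_const.
  - subst y. apply continuity_pt_filterlim.
    intros eps Heps. exists (exp (ln eps / a)). split; [apply exp_pos|].
    intros x [_ Hx]. simpl in Hx |- *. unfold R_dist in Hx |- *.
    rewrite Rminus_0_r in Hx.
    rewrite (rho_nonpos a 0) by lra. rewrite rpow_0 by exact Ha0. rewrite Rminus_0_r.
    destruct (Rle_lt_dec x 0) as [Hx0|Hx0].
    + rewrite rho_nonpos by exact Hx0. rewrite rpow_0 by exact Ha0. rewrite Rabs_R0. exact Heps.
    + rewrite rho_pos by exact Hx0. unfold Rpower. rewrite Rabs_pos_eq by (left; apply exp_pos).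
      rewrite Rabs_pos_eq in Hx by lra.
      assert (H1 : ln x < ln eps / a).
      { rewrite <- (ln_exp (ln eps / a)). apply ln_increasing; lra. }
      rewrite <- (exp_ln eps) by exact Heps. apply exp_increasing.
      apply (Rmult_lt_compat_l a) in H1; [|exact Hap].
      replace (a * (ln eps / a)) with (ln eps) in H1 by (field; lra). exact H1.
  - apply (continuous_ext_loc (rho a) (fun z => Rpower z a)).
    + exists (mkposreal _ Hgt). intros z Hz.
      apply ballR in Hz. simpl in Hz. rewrite rho_pos by (apply Rabs_lt_between in Hz; lra).
      reflexivity.
    + apply cont_Rpower; exact Hgt.
Qed.

Lemma rho_deriv (a y : R) : 0 < y -> is_derive (rho (a + 1)) y ((a + 1) * rho a y).
Proof.
  intros Hy. apply (@is_derive_ext_loc R_AbsRing R_NormedModule (fun z => Rpower z (a + 1))).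
  - exists (mkposreal _ Hy). intros z Hz.
    apply ballR in Hz. simpl in Hz. rewrite rho_pos by (apply Rabs_lt_between in Hz; lra).
    reflexivity.
  - rewrite rho_pos by exact Hy. replace a with (a + 1 - 1) at 2 by ring.
    apply is_derive_Reals. apply derivable_pt_lim_power. exact Hy.
Qed.
Lemma cR_mult (f g : R -> R) (x : R) :
  continuous f x -> continuous g x -> continuous (fun y => f y * g y) x.
Proof. intros Hf Hg. apply (continuous_mult f g x Hf Hg). Qed.

Lemma cR_comp (f g : R -> R) (x : R) :
  continuous f x -> continuous g (f x) -> continuous (fun y => g (f y)) x.
Proof. intros Hf Hg. apply (continuous_comp f g x Hf Hg). Qed.

Lemma cR_der (f : R -> R) (x : R) : ex_derive f x -> continuous f x.
Proof. apply (@ex_derive_continuous R_AbsRing R_NormedModule). Qed.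

Lemma cR_const (c x : R) : continuous (fun _ : R => c) x.
Proof. apply continuous_const. Qed.

Lemma is_derive_Rmult (f g : R -> R) (x df dg : R) :
  is_derive f x df -> is_derive g x dg -> is_derive (fun t => f t * g t) x (df * g x + f x * dg).
Proof.
  intros Hf Hg. apply is_derive_Reals in Hf. apply is_derive_Reals in Hg.
  apply is_derive_Reals. apply (derivable_pt_lim_mult f g x df dg Hf Hg).
Qed.

Lemma is_derive_Rcomp (f g : R -> R) (x df dg : R) :
  is_derive f x df -> is_derive g (f x) dg -> is_derive (fun t => g (f t)) x (dg * df).
Proof.
  intros Hf Hg. apply is_derive_Reals in Hf. apply is_derive_Reals in Hg.
  apply is_derive_Reals. apply (derivable_pt_lim_comp f g x df dg Hf Hg).
Qed.

Lemma exR (f : R -> R) (a b : R) :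
  (forall z, Rmin a b <= z <= Rmax a b -> continuous f z) -> ex_RInt f a b.
Proof. apply (@ex_RInt_continuous R_CompleteNormedModule). Qed.

Lemma RInt_extR (f g : R -> R) (a b : R) :
  (forall x : R, Rmin a b < x < Rmax a b -> f x = g x) -> RInt f a b = RInt g a b.
Proof. apply RInt_ext. Qed.

Lemma is_RInt_extR (f g : R -> R) (a b l : R) :
  (forall x : R, Rmin a b < x < Rmax a b -> f x = g x) -> is_RInt f a b l -> is_RInt g a b l.
Proof. apply is_RInt_ext. Qed.

Lemma is_RInt_deriveR (f df : R -> R) (a b : R) :
  (forall x : R, Rmin a b <= x <= Rmax a b -> is_derive f x (df x)) ->
  (forall x : R, Rmin a b <= x <= Rmax a b -> continuous df x) ->
  is_RInt df a b (f b - f a).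
Proof. intros H1 H2. exact (is_RInt_derive f df a b H1 H2). Qed.

Lemma RInt_minusR (f g : R -> R) (a b : R) :
  ex_RInt f a b -> ex_RInt g a b -> RInt (fun x => f x - g x) a b = RInt f a b - RInt g a b.
Proof. intros H1 H2. exact (RInt_minus f g a b H1 H2). Qed.

Lemma RInt_plusR (f g : R -> R) (a b : R) :
  ex_RInt f a b -> ex_RInt g a b -> RInt (fun x => f x + g x) a b = RInt f a b + RInt g a b.
Proof. intros H1 H2. exact (RInt_plus f g a b H1 H2). Qed.

Lemma RInt_scalR (f : R -> R) (a b k : R) :
  ex_RInt f a b -> RInt (fun x => k * f x) a b = k * RInt f a b.
Proof. intros H1. exact (RInt_scal f a b k H1). Qed.

Lemma ex_RInt_scalR (f : R -> R) (a b k : R) :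
  ex_RInt f a b -> ex_RInt (fun x => k * f x) a b.
Proof. intros H1. exact (ex_RInt_scal f a b k H1). Qed.

Lemma is_RInt_deriveV (f df : R -> R) (a b v : R) :
  (forall x : R, Rmin a b <= x <= Rmax a b -> is_derive f x (df x)) ->
  (forall x : R, Rmin a b <= x <= Rmax a b -> continuous df x) ->
  v = f b - f a -> is_RInt df a b v.
Proof. intros H1 H2 ->. apply is_RInt_deriveR; assumption. Qed.

Lemma small_zero (X C : R) : (forall e, 0 < e <= 1 -> Rabs X <= e * C) -> X = 0.
Proof.
  intros H. destruct (Req_EM_T X 0) as [|Hne]; [assumption|exfalso].
  assert (HX : 0 < Rabs X) by (apply Rabs_pos_lt; exact Hne).
  assert (HC : 0 < C) by (specialize (H 1 ltac:(lra)); lra).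
  set (e := Rmin 1 (Rabs X / (2 * C))).
  assert (He : 0 < e <= 1).
  { unfold e. split; [apply Rmin_pos; [lra|apply Rdiv_lt_0_compat; lra]|apply Rmin_l]. }
  specialize (H e He).
  assert (e <= Rabs X / (2 * C)) by apply Rmin_r.
  assert (e * C <= Rabs X / 2).
  { apply (Rmult_le_compat_r C) in H0; [|lra]. replace (Rabs X / (2 * C) * C) with (Rabs X / 2) in H0 by (field; lra). exact H0. }
  lra.
Qed.

Definition gK (a u : R) : R := 2 * rho a (1 - u ^ 2).
Definition Kf (a : R) : R := RInt (gK a) 0 1.

Lemma poly_cont (u : R) : continuous (fun u => 1 - u ^ 2) u.
Proof. apply cR_der. auto_derive. exact I. Qed.

Lemma gK_cont (a u : R) : 0 <= a -> continuous (gK a) u.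
Proof.
  intros Ha. unfold gK. apply cR_mult; [apply cR_const|].
  apply (cR_comp (fun u => 1 - u ^ 2) (rho a)); [apply poly_cont|apply rho_cont; exact Ha].
Qed.

Lemma gK_ex (a x y : R) : 0 <= a -> ex_RInt (gK a) x y.
Proof. intros Ha. apply exR. intros; apply gK_cont; exact Ha. Qed.

Lemma Kf_ge0 (a : R) : 0 <= a -> 0 <= Kf a.
Proof.
  intros Ha. unfold Kf. apply RInt_ge_0; [lra|apply gK_ex; exact Ha|].
  intros x _. unfold gK. pose proof (rho_ge0 a (1 - x ^ 2)). lra.
Qed.

Lemma Kf_mono (a b : R) : 0 <= a <= b -> Kf b <= Kf a.
Proof.
  intros Hab. unfold Kf. apply RInt_le; [lra|apply gK_ex; lra|apply gK_ex; lra|].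
  intros x Hx. unfold gK. pose proof (rho_mono a b (1 - x ^ 2) Hab).
  assert (0 <= x ^ 2) by (apply pow2_ge_0). specialize (H ltac:(lra)). lra.
Qed.

Lemma Kf_0 : Kf 0 = 2.
Proof.
  unfold Kf. rewrite (RInt_extR _ (fun _ => 2)).
  - rewrite RInt_const. unfold scal; simpl. unfold mult; simpl. ring.
  - intros x _. unfold gK. rewrite rho_a0. ring.
Qed.

Lemma RInt_bound (f : R -> R) (a b M : R) : a <= b -> ex_RInt f a b ->
  (forall t, a <= t <= b -> Rabs (f t) <= M) -> Rabs (RInt f a b) <= (b - a) * M.
Proof. apply abs_RInt_le_const. Qed.

Lemma Kf_rec (a : R) : 0 <= a -> Kf (a + 1) * (a + 3/2) = (a + 1) * Kf a.
Proof.
  intros Ha.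
  set (Phi := fun u => (2 * a + 3) * rho (a + 1) (1 - u ^ 2) - 2 * (a + 1) * rho a (1 - u ^ 2)).
  set (F := fun u => u * rho (a + 1) (1 - u ^ 2)).
  assert (HPc : forall u, continuous Phi u).
  { intros u. unfold Phi.
    apply (continuous_minus (fun u => (2 * a + 3) * rho (a + 1) (1 - u ^ 2)) (fun u => 2 * (a + 1) * rho a (1 - u ^ 2))).
    - apply cR_mult; [apply cR_const|].
      apply (cR_comp (fun u => 1 - u ^ 2) (rho (a+1))); [apply poly_cont|apply rho_cont; lra].
    - apply cR_mult; [apply cR_const|].
      apply (cR_comp (fun u => 1 - u ^ 2) (rho a)); [apply poly_cont|apply rho_cont; lra]. }
  assert (HPex : forall x y, ex_RInt Phi x y).
  { intros; apply exR; intros; apply HPc. }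
  assert (HD : forall u, -1 < u < 1 -> is_derive F u (Phi u)).
  { intros u Hu.
    assert (Hy : 0 < 1 - u ^ 2) by nra.
    pose proof (is_derive_Rcomp (fun u => 1 - u ^ 2) (rho (a + 1)) u (- 2 * u) ((a + 1) * rho a (1 - u ^ 2))) as H1.
    assert (Hp : is_derive (fun u => 1 - u ^ 2) u (- 2 * u)) by (auto_derive; [exact I|ring]).
    specialize (H1 Hp (rho_deriv a (1 - u ^ 2) Hy)).
    pose proof (is_derive_Rmult (fun u => u) (fun u => rho (a + 1) (1 - u ^ 2)) u 1 _ ltac:(auto_derive; [exact I|ring]) H1) as H2.
    unfold F. replace (Phi u) with (1 * rho (a + 1) (1 - u ^ 2) + u * ((a + 1) * rho a (1 - u ^ 2) * (-2 * u))); [exact H2|].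
    unfold Phi. rewrite (rho_succ a (1 - u ^ 2)) by lra. ring. }
  assert (HI : forall c, 0 <= c < 1 -> RInt Phi 0 c = F c).
  { intros c Hc. apply is_RInt_unique.
    replace (F c) with (F c - F 0) by (unfold F; ring).
    apply is_RInt_deriveR.
    - intros x Hx. apply HD. rewrite Rmin_left in Hx by lra. rewrite Rmax_right in Hx by lra. lra.
    - intros x _. apply HPc. }
  assert (Hval : RInt Phi 0 1 = (2 * a + 3) / 2 * Kf (a + 1) - (a + 1) * Kf a).
  { unfold Kf.
    rewrite (RInt_extR Phi (fun u => (2 * a + 3) / 2 * gK (a + 1) u - (a + 1) * gK a u)).
    2:{ intros x _. unfold Phi, gK. field. }
    rewrite RInt_minusR by (apply ex_RInt_scalR; apply gK_ex; lra).
    rewrite !RInt_scalR by (apply gK_ex; lra). reflexivity. }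
  assert (Hz : RInt Phi 0 1 = 0).
  { apply (small_zero _ (2 + (4 * a + 5))). intros e He.
    pose (c := 1 - e). assert (Hc : 0 <= c < 1) by (unfold c; lra).
    assert (Hce : 1 - c = e) by (unfold c; ring). clearbody c.
    rewrite <- (RInt_Chasles Phi 0 c 1) by apply HPex.
    rewrite HI by exact Hc.
    change (plus (F c) (RInt Phi c 1)) with (F c + RInt Phi c 1).
    assert (HF : Rabs (F c) <= 2 * e).
    { unfold F. pose proof (rho_le_y a (1 - c ^ 2) Ha ltac:(nra)).
      pose proof (rho_ge0 (a + 1) (1 - c ^ 2)).
      rewrite Rabs_pos_eq by nra. nra. }
    assert (HR : Rabs (RInt Phi c 1) <= (1 - c) * (4 * a + 5)).
    { apply RInt_bound; [lra|apply HPex|].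
      intros t Ht. unfold Phi.
      pose proof (rho_le1 (a + 1) (1 - t ^ 2) ltac:(lra) ltac:(nra)).
      pose proof (rho_le1 a (1 - t ^ 2) Ha ltac:(nra)).
      pose proof (rho_ge0 (a + 1) (1 - t ^ 2)). pose proof (rho_ge0 a (1 - t ^ 2)).
      apply Rabs_le. split; nra. }
    pose proof (Rabs_triang (F c) (RInt Phi c 1)).
    rewrite Hce in HR. nra. }
  rewrite Hz in Hval. lra.
Qed.

Lemma Kf_half : Kf (1/2) = PI / 2.
Proof.
  unfold Kf.
  rewrite (RInt_extR _ (fun u => 2 * sqrt (1 - u ^ 2))).
  2:{ intros x Hx. rewrite Rmin_left in Hx by lra. rewrite Rmax_right in Hx by lra.
      unfold gK. rewrite rho_half by nra. reflexivity. }
  assert (Hs0 : sin 0 = 0) by apply sin_0.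
  replace (RInt (fun u : R => 2 * sqrt (1 - u ^ 2)) 0 1) with
    (RInt (fun u : R => 2 * sqrt (1 - u ^ 2)) (sin 0) (sin (PI / 2))) by (rewrite sin_0, sin_PI2; reflexivity).
  rewrite <- (RInt_comp (fun u : R => 2 * sqrt (1 - u ^ 2)) sin cos).
  - apply is_RInt_unique.
    apply (is_RInt_extR (fun t => 2 * cos t ^ 2)).
    { intros x Hx. pose proof PI2_RGT_0. rewrite Rmin_left in Hx by lra. rewrite Rmax_right in Hx by lra.
      change (scal (cos x) (2 * sqrt (1 - sin x ^ 2))) with (cos x * (2 * sqrt (1 - sin x ^ 2))).
      pose proof (sin2_cos2 x). unfold Rsqr in H0.
      replace (1 - sin x ^ 2) with (cos x ^ 2) by (simpl; lra).
      rewrite sqrt_pow2 by (apply cos_ge_0; lra). ring. }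
    apply (is_RInt_deriveV (fun t => t + sin t * cos t)).
    3:{ rewrite sin_PI2, cos_PI2, sin_0, cos_0. ring. }
    + intros x _. auto_derive; [exact I|]. pose proof (sin2_cos2 x). unfold Rsqr in H. nra.
    + intros x _. apply cR_der. auto_derive. exact I.
  - intros x _. apply cR_mult; [apply cR_const|].
    apply (cR_comp (fun u => 1 - u ^ 2) sqrt); [apply poly_cont|].
    apply continuity_pt_filterlim. apply continuity_pt_sqrt.
    pose proof (sin2_cos2 x). unfold Rsqr in H. pose proof (pow2_ge_0 (cos x)). simpl in *. nra.
  - intros x _. split.
    + apply is_derive_Reals. apply derivable_pt_lim_sin.
    + apply cR_der. auto_derive. exact I.
Qed.
Definition Qf (a : R) : R := (a + 1) * Kf a * Kf (a + 1/2).

Lemma Q_period (a : R) : 0 <= a -> Qf (a + 1/2) = Qf a.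
Proof.
  intros Ha. unfold Qf. replace (a + 1/2 + 1/2) with (a + 1) by field.
  pose proof (Kf_rec a Ha).
  replace (a + 1 / 2 + 1) with (a + 3/2) by field.
  transitivity (Kf (a + 1/2) * (Kf (a + 1) * (a + 3/2))); [ring|]. rewrite H. ring.
Qed.

Lemma Q_grid (m : nat) : Qf (INR m / 2) = PI.
Proof.
  induction m as [|m IH].
  - unfold Qf. replace (INR 0 / 2) with 0 by (simpl; field).
    replace (0 + 1/2) with (1/2) by field. rewrite Kf_0, Kf_half. field.
  - replace (INR (S m) / 2) with (INR m / 2 + 1/2) by (rewrite S_INR; field).
    rewrite Q_period; [exact IH|]. pose proof (pos_INR m). lra.
Qed.

Lemma Q_shift (a : R) (k : nat) : 0 <= a -> Qf (a + INR k / 2) = Qf a.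
Proof.
  intros Ha. induction k as [|k IH].
  - simpl. replace (a + 0 / 2) with a by field. reflexivity.
  - replace (a + INR (S k) / 2) with (a + INR k / 2 + 1/2) by (rewrite S_INR; field).
    rewrite Q_period; [exact IH|]. pose proof (pos_INR k). lra.
Qed.

Lemma exists_grid (a : R) : 0 <= a -> exists m : nat, INR m <= 2 * a < INR m + 1.
Proof.
  intros Ha. destruct (archimed (2 * a)) as [H1 H2].
  set (z := (up (2 * a) - 1)%Z).
  assert (Hz : (0 <= z)%Z).
  { unfold z. assert (0 < IZR (up (2 * a))) by lra. apply lt_IZR in H. lia. }
  exists (Z.to_nat z). rewrite INR_IZR_INZ, Znat.Z2Nat.id by exact Hz.
  unfold z. rewrite minus_IZR. simpl. lra.
Qed.

Lemma Q_all (a : R) : 0 <= a -> Qf a = PI.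
Proof.
  intros Ha. destruct (exists_grid a Ha) as [m Hm].
  apply Rminus_diag_uniq. apply (small_zero _ PI). intros e He.
  destruct (archimed_cor1 e ltac:(lra)) as [k [Hk Hk0]].
  assert (Hkp : 0 < INR k) by (apply lt_0_INR; exact Hk0).
  set (A := a + INR k / 2). set (g := INR (m + k) / 2).
  assert (Hg : g <= A <= g + 1/2) by (unfold A, g; rewrite plus_INR; lra).
  assert (Hg0 : INR k / 2 <= g) by (unfold g; rewrite plus_INR; pose proof (pos_INR m); lra).
  assert (HQA : Qf a = (A + 1) * Kf A * Kf (A + 1/2)) by (rewrite <- (Q_shift a k Ha); unfold A, Qf; reflexivity).
  assert (HQg : (g + 1) * Kf g * Kf (g + 1/2) = PI) by (apply (Q_grid (m + k))).
  assert (HQg2 : (g + 1/2 + 1) * Kf (g + 1/2) * Kf (g + 1) = PI).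
  { pose proof (Q_grid (m + k + 1)) as E. unfold Qf in E.
    replace (INR (m + k + 1) / 2) with (g + 1/2) in E by (unfold g; rewrite !plus_INR; simpl; field).
    replace (g + 1/2 + 1/2) with (g + 1) in E by field. exact E. }
  assert (K1 : Kf A <= Kf g) by (apply Kf_mono; lra).
  assert (K2 : Kf (A + 1/2) <= Kf (g + 1/2)) by (apply Kf_mono; lra).
  assert (K3 : Kf (g + 1/2) <= Kf A) by (apply Kf_mono; lra).
  assert (K4 : Kf (g + 1) <= Kf (A + 1/2)) by (apply Kf_mono; lra).
  assert (P1 : 0 <= Kf (A + 1/2)) by (apply Kf_ge0; lra).
  assert (P2 : 0 <= Kf (g + 1/2)) by (apply Kf_ge0; lra).
  assert (P3 : 0 <= Kf (g + 1)) by (apply Kf_ge0; lra).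
  assert (P4 : 0 <= Kf A) by (apply Kf_ge0; lra).
  assert (Up : Qf a <= (A + 1) / (g + 1) * PI).
  { rewrite HQA, <- HQg.
    replace ((A + 1) / (g + 1) * ((g + 1) * Kf g * Kf (g + 1 / 2))) with ((A + 1) * (Kf g * Kf (g + 1/2))) by (field; lra).
    assert (Kf A * Kf (A + 1/2) <= Kf g * Kf (g + 1/2)) by (apply Rmult_le_compat; lra).
    rewrite (Rmult_assoc (A + 1)). apply Rmult_le_compat_l; [unfold A; pose proof (pos_INR k); lra|]. exact H. }
  assert (Lo : (A + 1) / (g + 3/2) * PI <= Qf a).
  { rewrite HQA, <- HQg2.
    replace ((A + 1) / (g + 3/2) * ((g + 1 / 2 + 1) * Kf (g + 1 / 2) * Kf (g + 1))) with ((A + 1) * (Kf (g + 1/2) * Kf (g + 1))) by (field; lra).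
    assert (Kf (g + 1/2) * Kf (g + 1) <= Kf A * Kf (A + 1/2)) by (apply Rmult_le_compat; lra).
    rewrite (Rmult_assoc (A + 1)). apply Rmult_le_compat_l; [unfold A; pose proof (pos_INR k); lra|]. exact H. }
  pose proof PI_RGT_0.
  assert (E1 : (A + 1) / (g + 1) * PI - PI <= e * PI).
  { replace ((A + 1) / (g + 1) * PI - PI) with ((A - g) / (g + 1) * PI) by (field; lra).
    apply Rmult_le_compat_r; [lra|].
    apply Rle_trans with (/ INR k); [|lra].
    apply Rle_trans with ((1/2) / (g + 1)).
    - unfold Rdiv. apply Rmult_le_compat_r; [apply Rlt_le, Rinv_0_lt_compat; lra|lra].
    - apply Rle_trans with ((1/2) / (INR k / 2)); [|right; field; lra].
      unfold Rdiv. apply Rmult_le_compat_l; [lra|]. apply Rinv_le_contravar; lra. }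
  assert (E2 : PI - (A + 1) / (g + 3/2) * PI <= e * PI).
  { replace (PI - (A + 1) / (g + 3/2) * PI) with ((g + 1/2 - A) / (g + 3/2) * PI) by (field; lra).
    apply Rmult_le_compat_r; [lra|].
    apply Rle_trans with (/ INR k); [|lra].
    apply Rle_trans with ((1/2) / (g + 3/2)).
    - unfold Rdiv. apply Rmult_le_compat_r; [apply Rlt_le, Rinv_0_lt_compat; lra|lra].
    - apply Rle_trans with ((1/2) / (INR k / 2)); [|right; field; lra].
      unfold Rdiv. apply Rmult_le_compat_l; [lra|]. apply Rinv_le_contravar; lra. }
  apply Rabs_le. split; lra.
Qed.

Lemma Kf_pos (N : R) : 0 <= N -> 0 < Kf N.
Proof.
  intros HN. pose proof (Q_all N HN) as E. unfold Qf in E.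
  pose proof (Kf_ge0 N HN). pose proof (Kf_ge0 (N + 1/2) ltac:(lra)). pose proof PI_RGT_0.
  destruct H; [exact H|]. rewrite <- H in E. lra.
Qed.

Lemma Kf_sq_bounds (N : R) : 1/2 <= N -> PI / (N + 1) <= Kf N ^ 2 <= PI / (N + 1/2).
Proof.
  intros HN. pose proof (Q_all N ltac:(lra)) as E1. pose proof (Q_all (N - 1/2) ltac:(lra)) as E2.
  unfold Qf in E1, E2. replace (N - 1/2 + 1/2) with N in E2 by field.
  replace (N - 1/2 + 1) with (N + 1/2) in E2 by field.
  assert (M1 : Kf (N + 1/2) <= Kf N) by (apply Kf_mono; lra).
  assert (M2 : Kf N <= Kf (N - 1/2)) by (apply Kf_mono; lra).
  pose proof (Kf_ge0 (N + 1/2) ltac:(lra)). pose proof (Kf_ge0 N ltac:(lra)).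
  split.
  - apply (Rmult_le_reg_l (N + 1)); [lra|].
    replace ((N + 1) * (PI / (N + 1))) with PI by (field; lra).
    rewrite <- E1. simpl. rewrite Rmult_1_r. rewrite (Rmult_assoc (N + 1)).
    apply Rmult_le_compat_l; [lra|]. apply Rmult_le_compat_l; lra.
  - apply (Rmult_le_reg_l (N + 1/2)); [lra|].
    replace ((N + 1/2) * (PI / (N + 1/2))) with PI by (field; lra).
    rewrite <- E2. simpl. rewrite Rmult_1_r. rewrite (Rmult_assoc (N + 1/2)).
    apply Rmult_le_compat_l; [lra|]. rewrite (Rmult_comm (Kf (N - 1/2))). apply Rmult_le_compat_l; lra.
Qed.
Lemma ln_lower (y : R) : 0 < y -> 1 - / y <= ln y.
Proof.
  intros Hy. pose proof (exp_ineq1_le (- ln y)). rewrite exp_Ropp, exp_ln in H by exact Hy. lra.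
Qed.

Lemma ln_upper (y : R) : 0 < y -> ln y <= y - 1.
Proof. intros Hy. pose proof (exp_ineq1_le (ln y)). rewrite exp_ln in H by exact Hy. lra. Qed.

Definition En (z : R) (n : nat) : R :=
  z * (ln (INR (S n)) - ln (INR n)) - (ln (z + INR (S n)) - ln (INR (S n))).

Lemma fact_pos (n : nat) : 0 < INR (Factorial.fact n).
Proof. apply lt_0_INR. apply Factorial.lt_O_fact. Qed.

Lemma gs_pos (z : R) (n : nat) : 0 < z -> 0 < gamma_seq z n.
Proof.
  intros Hz. unfold gamma_seq, Rpower. pose proof (fact_pos n). pose proof (exp_pos (z * ln (INR n))).
  pose proof (poch_pos z (S n) Hz). apply Rdiv_lt_0_compat; [nra|lra].
Qed.

Lemma gs_step (z : R) (n : nat) : 0 < z -> (1 <= n)%nat ->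
  gamma_seq z (S n) = gamma_seq z n * exp (En z n).
Proof.
  intros Hz Hn. assert (HN : 0 < INR n) by (apply lt_0_INR; lia).
  assert (HN1 : 0 < INR (S n)) by (apply lt_0_INR; lia).
  unfold gamma_seq, Rpower, En.
  replace (z * (ln (INR (S n)) - ln (INR n)) - (ln (z + INR (S n)) - ln (INR (S n))))
    with (z * ln (INR (S n)) + - (z * ln (INR n)) + ln (INR (S n)) + - ln (z + INR (S n))) by ring.
  rewrite !exp_plus, !exp_Ropp, !exp_ln by lra.
  rewrite fact_S, (poch_S_r z (S n)).
  pose proof (fact_pos n). pose proof (exp_pos (z * ln (INR n))). pose proof (exp_pos (z * ln (INR (S n)))).
  pose proof (poch_pos z (S n) Hz).
  field. repeat split; lra.
Qed.

Lemma En_bounds (z : R) (n : nat) : 0 < z -> (1 <= n)%nat ->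
  0 <= En z n <= z * (z + 1) * (/ INR n - / INR (S n)).
Proof.
  intros Hz Hn. assert (HN : 1 <= INR n) by (apply (le_INR 1); lia).
  assert (HS : INR (S n) = INR n + 1) by apply S_INR.
  set (N := INR n) in *. set (N1 := INR (S n)) in *.
  assert (EL : ln N1 - ln N = ln (N1 / N)) by (rewrite ln_div by lra; reflexivity).
  assert (EM : ln (z + N1) - ln N1 = ln ((z + N1) / N1)) by (rewrite ln_div by lra; reflexivity).
  pose proof (ln_lower (N1 / N) ltac:(apply Rdiv_lt_0_compat; lra)) as L1.
  pose proof (ln_upper (N1 / N) ltac:(apply Rdiv_lt_0_compat; lra)) as L2.
  pose proof (ln_lower ((z + N1) / N1) ltac:(apply Rdiv_lt_0_compat; lra)) as M1.
  pose proof (ln_upper ((z + N1) / N1) ltac:(apply Rdiv_lt_0_compat; lra)) as M2.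
  replace (1 - / (N1 / N)) with (/ N1) in L1 by (rewrite HS; field; lra).
  replace (N1 / N - 1) with (/ N) in L2 by (rewrite HS; field; lra).
  replace (1 - / ((z + N1) / N1)) with (z / (z + N1)) in M1 by (field; lra).
  replace ((z + N1) / N1 - 1) with (z / N1) in M2 by (field; lra).
  unfold En. fold N N1. rewrite EL, EM.
  set (L := ln (N1 / N)) in *. set (M := ln ((z + N1) / N1)) in *.
  split.
  - assert (z * / N1 <= z * L) by (apply Rmult_le_compat_l; lra).
    replace (z / N1) with (z * / N1) in M2 by reflexivity. lra.
  - assert (z * L <= z * / N) by (apply Rmult_le_compat_l; lra).
    assert (E : z * / N - z / (z + N1) = z * (z + 1) * / (N * (z + N1))) by (rewrite HS; field; lra).
    assert (E2 : z * (z + 1) * (/ N - / N1) = z * (z + 1) * / (N * N1)) by (rewrite HS; field; lra).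
    assert (I : / (N * (z + N1)) <= / (N * N1)).
    { apply Rinv_le_contravar; [nra|]. nra. }
    assert (z * (z + 1) * / (N * (z + N1)) <= z * (z + 1) * / (N * N1)).
    { apply Rmult_le_compat_l; [nra|exact I]. }
    lra.
Qed.

Lemma gs_incr (z : R) (n : nat) : 0 < z -> (1 <= n)%nat -> gamma_seq z n <= gamma_seq z (S n).
Proof.
  intros Hz Hn. rewrite gs_step by assumption.
  pose proof (En_bounds z n Hz Hn). pose proof (gs_pos z n Hz).
  assert (1 <= exp (En z n)) by (rewrite <- exp_0; apply exp_le_mono; lra). nra.
Qed.

Lemma gs_bound (z : R) (k : nat) : 0 < z ->
  gamma_seq z (S k) * exp (z * (z + 1) * / INR (S k)) <= gamma_seq z 1 * exp (z * (z + 1)).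
Proof.
  intros Hz. induction k as [|k IH].
  - replace (INR 1) with 1 by reflexivity. rewrite Rinv_1, Rmult_1_r. lra.
  - rewrite gs_step by (auto; lia).
    pose proof (En_bounds z (S k) Hz ltac:(lia)) as [_ HE].
    pose proof (gs_pos z (S k) Hz).
    eapply Rle_trans; [|exact IH].
    rewrite Rmult_assoc, <- exp_plus. apply Rmult_le_compat_l; [lra|]. apply exp_le_mono. lra.
Qed.

Lemma Gamma_cv (z : R) : 0 < z -> Un_cv (gamma_seq z) (Gamma z) /\ 0 < Gamma z.
Proof.
  intros Hz.
  set (s := fun k => gamma_seq z (S k)).
  assert (Hg : Un_growing s) by (intros k; unfold s; apply gs_incr; [exact Hz|lia]).
  assert (Hb : has_ub s).
  { exists (gamma_seq z 1 * exp (z * (z + 1))). intros x [i ->]. unfold s.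
    pose proof (gs_bound z i Hz). pose proof (gs_pos z (S i) Hz).
    assert (1 <= exp (z * (z + 1) * / INR (S i))).
    { apply Rle_trans with (exp 0); [rewrite exp_0; lra|]. apply exp_le_mono. pose proof (lt_0_INR (S i) ltac:(lia)).
      apply Rmult_le_pos; [nra|]. left; apply Rinv_0_lt_compat; lra. }
    apply Rle_trans with (gamma_seq z (S i) * exp (z * (z + 1) * / INR (S i))); [|exact H].
    rewrite <- (Rmult_1_r (gamma_seq z (S i))) at 1. apply Rmult_le_compat_l; lra. }
  destruct (growing_cv s Hg Hb) as [l Hl].
  assert (Hcv : Un_cv (gamma_seq z) l).
  { intros eps Heps. destruct (Hl eps Heps) as [N HN]. exists (S N). intros n Hn.
    destruct n as [|m]; [lia|]. apply (HN m). lia. }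
  assert (HG : Gamma z = l).
  { unfold Gamma. apply (UL_sequence (gamma_seq z)); [|exact Hcv].
    apply epsilon_spec. exists l. exact Hcv. }
  rewrite HG. split; [exact Hcv|].
  pose proof (growing_ineq s l Hg Hl 0%nat). unfold s in H. pose proof (gs_pos z 1 Hz). lra.
Qed.
Lemma Kf_poch (lam : R) (k : nat) : 0 <= lam ->
  Kf (lam + INR k) * poch (lam + 3/2) k = Kf lam * poch (lam + 1) k.
Proof.
  intros Hl. induction k as [|k IH].
  - simpl. rewrite Rplus_0_r. ring.
  - rewrite (poch_S_r (lam + 3/2) k), (poch_S_r (lam + 1) k).
    pose proof (Kf_rec (lam + INR k) ltac:(pose proof (pos_INR k); lra)) as E.
    replace (lam + INR k + 1) with (lam + INR (S k)) in E by (rewrite S_INR; ring).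
    transitivity ((Kf (lam + INR (S k)) * (lam + INR k + 3/2)) * poch (lam + 3/2) k); [ring|].
    rewrite E.
    transitivity ((lam + INR (S k)) * (Kf (lam + INR k) * poch (lam + 3/2) k)); [ring|].
    rewrite IH, S_INR. ring.
Qed.

Lemma Gamma_ratio (lam : R) : 0 <= lam -> Gamma (lam + 1) / Gamma (lam + 3/2) = Kf lam / sqrt PI.
Proof.
  intros Hl.
  destruct (Gamma_cv (lam + 1) ltac:(lra)) as [C1 P1].
  destruct (Gamma_cv (lam + 3/2) ltac:(lra)) as [C2 P2].
  pose proof PI_RGT_0 as HPI.
  set (s := fun n : nat => INR n * Kf (lam + INR (S n)) ^ 2).
  assert (Hs : Un_cv s PI).
  { intros eps Heps.
    assert (Hc : 0 < eps / (PI * (lam + 2))) by (apply Rdiv_lt_0_compat; [lra|nra]).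
    destruct (archimed_cor1 _ Hc) as [N0 [HN0 HN0p]].
    exists N0. intros n Hn. unfold R_dist, s.
    assert (Hn1 : 1 <= INR n) by (apply (le_INR 1); lia).
    assert (HN0r : 0 < INR N0) by (apply lt_0_INR; exact HN0p).
    assert (HnN0 : INR N0 <= INR n) by (apply le_INR; lia).
    rewrite S_INR. set (N := lam + (INR n + 1)).
    destruct (Kf_sq_bounds N ltac:(unfold N; lra)) as [B1 B2].
    assert (U : INR n * Kf N ^ 2 <= PI).
    { apply Rle_trans with (INR n * (PI / (N + 1/2))); [apply Rmult_le_compat_l; lra|].
      apply (Rmult_le_reg_r (N + 1/2)); [unfold N; lra|].
      replace (INR n * (PI / (N + 1 / 2)) * (N + 1 / 2)) with (INR n * PI) by (field; unfold N; lra).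
      unfold N. nra. }
    assert (L : PI - PI * (lam + 2) / INR n <= INR n * Kf N ^ 2).
    { apply Rle_trans with (INR n * (PI / (N + 1))); [|apply Rmult_le_compat_l; lra].
      replace (INR n * (PI / (N + 1))) with (PI - PI * (lam + 2) / (N + 1)) by (unfold N; field; lra).
      assert (PI * (lam + 2) / (N + 1) <= PI * (lam + 2) / INR n).
      { unfold Rdiv. apply Rmult_le_compat_l; [nra|]. apply Rinv_le_contravar; [lra|unfold N; lra]. }
      lra. }
    assert (L2 : PI * (lam + 2) / INR n <= PI * (lam + 2) / INR N0).
    { unfold Rdiv. apply Rmult_le_compat_l; [nra|]. apply Rinv_le_contravar; lra. }
    assert (L3 : PI * (lam + 2) / INR N0 < eps).
    { unfold Rdiv. apply (Rmult_lt_compat_l (PI * (lam + 2))) in HN0; [|nra].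
      replace (PI * (lam + 2) * (eps / (PI * (lam + 2)))) with eps in HN0 by (field; lra). exact HN0. }
    rewrite Rabs_left1 by lra. lra. }
  set (f := fun x => Kf lam / sqrt x).
  assert (Hf : continuity_pt f PI).
  { apply (continuity_pt_div (fct_cte (Kf lam)) sqrt PI).
    - apply continuity_pt_const. intros a b. reflexivity.
    - apply continuity_pt_sqrt. lra.
    - apply Rgt_not_eq. apply sqrt_lt_R0. exact HPI. }
  pose proof (continuity_seq f s PI Hf Hs) as Hfs.
  set (g1 := gamma_seq (lam + 1)) in *. set (g2 := gamma_seq (lam + 3/2)) in *.
  assert (Hr : Un_cv (fun n => g1 n / g2 n) (f PI)).
  { intros eps Heps. destruct (Hfs eps Heps) as [N HN]. exists (S N). intros n Hn.
    replace (g1 n / g2 n) with (f (s n)); [apply HN; lia|].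
    assert (Hn1 : 0 < INR n) by (apply lt_0_INR; lia).
    unfold f, s, g1, g2, gamma_seq.
    set (N1 := lam + INR (S n)).
    assert (HK : 0 < Kf N1) by (apply Kf_pos; unfold N1; pose proof (pos_INR (S n)); lra).
    pose proof (Kf_poch lam (S n) Hl) as KP. fold N1 in KP.
    rewrite sqrt_mult_alt by lra. rewrite sqrt_pow2 by lra.
    replace (lam + 3/2) with ((lam + 1) + / 2) by field.
    rewrite (Rpower_plus (lam + 1) (/ 2) (INR n)), Rpower_sqrt by exact Hn1.
    replace (lam + 1 + / 2) with (lam + 3/2) by field.
    pose proof (poch_pos (lam + 1) (S n) ltac:(lra)). pose proof (poch_pos (lam + 3/2) (S n) ltac:(lra)).
    pose proof (fact_pos n). pose proof (sqrt_lt_R0 _ Hn1). pose proof (exp_pos ((lam + 1) * ln (INR n))).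
    unfold Rpower at 1 2.
    assert (E : poch (lam + 3/2) (S n) = Kf lam * poch (lam + 1) (S n) / Kf N1) by (rewrite <- KP; field; lra).
    pose proof (Kf_pos lam Hl).
    rewrite E. field. repeat split; lra. }
  assert (Hg : forall n, g1 n = g1 n / g2 n * g2 n).
  { intros n. assert (0 < g2 n) by (apply gs_pos; lra). field. lra. }
  pose proof (CV_mult _ _ _ _ Hr C2) as Hm.
  assert (Hm' : Un_cv g1 (f PI * Gamma (lam + 3/2))).
  { intros eps Heps. destruct (Hm eps Heps) as [N HN]. exists N. intros n Hn. rewrite Hg. apply HN; exact Hn. }
  pose proof (UL_sequence _ _ _ C1 Hm') as EG.
  pose proof (sqrt_lt_R0 _ HPI). rewrite EG. unfold f. field. split; lra.
Qed.
Lemma defs_of_is_RInt (f : R -> R) (a b v : R) : is_RInt f a b v -> Defs.is_RInt f a b v.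
Proof.
  intros H. assert (Hex : ex_RInt f a b) by (exists v; exact H).
  exists (ex_RInt_Reals_0 f a b Hex). rewrite <- RInt_Reals. apply is_RInt_unique. exact H.
Qed.

Lemma is_RInt_of_defs (f : R -> R) (a b v : R) : Defs.is_RInt f a b v -> is_RInt f a b v.
Proof.
  intros [pr <-]. rewrite <- RInt_Reals. apply (@RInt_correct R_CompleteNormedModule).
  apply ex_RInt_Reals_1. exact pr.
Qed.

Lemma RInt_swapR (f : R -> R) (a b : R) : ex_RInt f a b -> RInt f b a = - RInt f a b.
Proof. intros H. symmetry. exact (opp_RInt_swap f a b H). Qed.

Lemma is_RInt_reflR (f : R -> R) (c b v : R) :
  is_RInt (fun t => f (- t)) (- b) (- c) v -> is_RInt f c b v.
Proof.
  intros H.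
  pose proof (is_RInt_comp_opp (fun t => f (- t)) b c v H) as H1.
  apply is_RInt_swap in H1. apply is_RInt_opp in H1.
  rewrite <- (Ropp_involutive v).
  apply (is_RInt_extR (fun y => opp (opp (f (- - y))))); [|exact H1].
  intros x _. unfold opp; simpl. rewrite !Ropp_involutive. reflexivity.
Qed.

Lemma refl_left (f : R -> R) (a b l : R) :
  imp_int_right (fun t => f (- t)) (- b) (- a) l -> imp_int_left f a b l.
Proof.
  intros [[Hab Hl]|[Hab H]].
  - left. split; [lra|exact Hl].
  - right. split; [lra|]. intros eps Heps. destruct (H eps Heps) as [d [Hd Hc]].
    exists d. split; [exact Hd|]. intros c Hcb Hc2.
    destruct (Hc (- c) ltac:(lra) ltac:(lra)) as [v [Hv Hvl]].
    exists v. split; [|exact Hvl].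
    apply defs_of_is_RInt. apply is_RInt_reflR. apply is_RInt_of_defs. exact Hv.
Qed.

Lemma RInt_sum (f : nat -> R -> R) (a b : R) (N : nat) :
  (forall k, ex_RInt (f k) a b) ->
  ex_RInt (fun u => sum_f_R0 (fun k => f k u) N) a b /\
  RInt (fun u => sum_f_R0 (fun k => f k u) N) a b = sum_f_R0 (fun k => RInt (f k) a b) N.
Proof.
  intros Hf. induction N as [|N [IH1 IH2]].
  - simpl. split; [apply Hf|reflexivity].
  - simpl. split.
    + apply (ex_RInt_plus (V := R_NormedModule) (fun u => sum_f_R0 (fun k => f k u) N) (f (S N))); [exact IH1|apply Hf].
    + rewrite RInt_plusR; [|exact IH1|apply Hf]. rewrite IH2. reflexivity.
Qed.

Lemma geg_cont (mu : R) (n : nat) (t : R) : continuous (gegenbauer mu n) t.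
Proof.
  destruct n as [|m].
  - apply (continuous_ext (fun _ => 1)); [|apply continuous_const].
    intros s. unfold gegenbauer. simpl. field.
  - apply cR_der. exists (2 * mu * gegenbauer (mu + 1) m t). apply geg_deriv.
Qed.

Lemma cont_bound (G : R -> R) (a b : R) : a <= b -> (forall u, continuous G u) ->
  exists M, 0 < M /\ forall u, a <= u <= b -> Rabs (G u) <= M.
Proof.
  intros Hab HG.
  destruct (continuity_ab_maj (fun u => Rabs (G u)) a b Hab) as [Mx [HM _]].
  { intros c _. apply continuity_pt_filterlim.
    apply (cR_comp G Rabs c); [apply HG|]. apply continuity_pt_filterlim. apply Rcontinuity_abs. }
  exists (Rabs (G Mx) + 1). split; [pose proof (Rabs_pos (G Mx)); lra|].
  intros u Hu. specialize (HM u Hu). simpl in HM. lra.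
Qed.
Lemma cont_inv_sqrt (x t : R) : t < x -> continuous (fun t => / sqrt (x - t)) t.
Proof.
  intros Ht. apply (continuous_Rinv_comp (fun t => sqrt (x - t))).
  - apply (cR_comp (fun t => x - t) sqrt); [apply cR_der; auto_derive; exact I|].
    apply continuity_pt_filterlim. apply continuity_pt_sqrt. lra.
  - apply Rgt_not_eq. apply sqrt_lt_R0. lra.
Qed.

Lemma core (lam x : R) (p : R -> R) : 0 <= lam -> -1 < x -> (forall t, continuous p t) ->
  imp_int_right (fun t => / sqrt (x - t) * rpow (1 + t) lam * p t) (-1) x
    (RInt (fun u => 2 * sqrt (1 + x) * rho lam ((1 + x) * (1 - u ^ 2)) * p (x - (1 + x) * u ^ 2)) 0 1).
Proof.
  intros Hl Hx Hp. right. split; [exact Hx|]. intros eps Heps.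
  set (h := 1 + x). assert (Hh : 0 < h) by (unfold h; lra).
  set (G := fun u => 2 * sqrt h * rho lam (h * (1 - u ^ 2)) * p (x - h * u ^ 2)).
  assert (HGc : forall u, continuous G u).
  { intros u. unfold G. apply cR_mult.
    - apply cR_mult; [apply cR_const|].
      apply (cR_comp (fun u => h * (1 - u ^ 2)) (rho lam)); [apply cR_der; auto_derive; exact I|apply rho_cont; exact Hl].
    - apply (cR_comp (fun u => x - h * u ^ 2) p); [apply cR_der; auto_derive; exact I|apply Hp]. }
  assert (HGex : forall a b, ex_RInt G a b) by (intros; apply exR; intros; apply HGc).
  destruct (cont_bound G 0 1 ltac:(lra) HGc) as [M [HM HMb]].
  assert (HeM : 0 < eps / M) by (apply Rdiv_lt_0_compat; lra).
  exists (h * (eps / M) ^ 2). split; [apply Rmult_lt_0_compat; [lra|apply pow_lt; lra]|].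
  intros c Hc1 Hc2.
  assert (Hq : 0 < (x - c) / h) by (apply Rdiv_lt_0_compat; lra).
  set (uc := sqrt ((x - c) / h)).
  assert (Huc0 : 0 < uc) by (apply sqrt_lt_R0; exact Hq).
  assert (Huc2 : uc ^ 2 = (x - c) / h) by (unfold uc; rewrite <- Rsqr_pow2; apply Rsqr_sqrt; lra).
  assert (Huc1 : uc <= 1).
  { unfold uc. rewrite <- sqrt_1. apply sqrt_le_1_alt.
    apply (Rmult_le_reg_r h); [lra|]. unfold Rdiv. rewrite Rmult_assoc, Rinv_l by lra. unfold h. lra. }
  assert (Hucs : uc < eps / M).
  { unfold uc. rewrite <- (sqrt_pow2 (eps / M)) by lra.
    apply sqrt_lt_1; [lra|apply pow2_ge_0|].
    apply (Rmult_lt_reg_r h); [lra|]. unfold Rdiv at 1. rewrite Rmult_assoc, Rinv_l by lra. lra. }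
  set (ftil := fun t => / sqrt (x - t) * rho lam (1 + t) * p t).
  assert (Hft : forall t, t < x -> continuous ftil t).
  { intros t Ht. unfold ftil. apply cR_mult; [apply cR_mult|].
    - apply cont_inv_sqrt; exact Ht.
    - apply (cR_comp (fun t => 1 + t) (rho lam)); [apply cR_der; auto_derive; exact I|apply rho_cont; exact Hl].
    - apply Hp. }
  assert (Hfex : ex_RInt ftil (-1) c).
  { apply exR. intros z Hz. apply Hft. rewrite Rmin_left in Hz by lra. rewrite Rmax_right in Hz by lra. lra. }
  pose proof (RInt_comp ftil (fun u => x - h * u ^ 2) (fun u => - 2 * h * u) uc 1) as Hs.
  assert (E1 : x - h * uc ^ 2 = c) by (rewrite Huc2; field; lra).
  assert (E2 : x - h * 1 ^ 2 = -1) by (unfold h; ring).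
  cbv beta in Hs. rewrite E1, E2 in Hs.
  specialize (Hs ltac:(intros y Hy; rewrite Rmin_left in Hy by lra; rewrite Rmax_right in Hy by lra;
                        apply Hft; assert (0 < h * y ^ 2) by (apply Rmult_lt_0_compat; [lra|apply pow_lt; lra]); lra)).
  specialize (Hs ltac:(intros y _; split; [auto_derive; [exact I|ring]|apply cR_der; auto_derive; exact I])).
  assert (Hs' : RInt (fun y => (-2 * h * y) * ftil (x - h * y ^ 2)) uc 1 = RInt ftil c (-1)) by exact Hs.
  assert (Hs2 : RInt ftil c (-1) = - RInt G uc 1).
  { rewrite <- Hs'.
    rewrite (RInt_extR _ (fun u => -1 * G u)).
    2:{ intros y Hy. rewrite Rmin_left in Hy by lra. rewrite Rmax_right in Hy by lra.
        unfold ftil, G.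
        replace (x - (x - h * y ^ 2)) with (h * y ^ 2) by ring.
        replace (1 + (x - h * y ^ 2)) with (h * (1 - y ^ 2)) by (unfold h; ring).
        rewrite sqrt_mult_alt by lra. rewrite sqrt_pow2 by lra.
        pose proof (sqrt_lt_R0 h Hh). pose proof (sqrt_sqrt h ltac:(lra)).
        replace (-2 * h * y) with (-2 * (sqrt h * sqrt h) * y) by (rewrite H0; reflexivity).
        field. split; lra. }
    rewrite RInt_scalR by apply HGex. change (@eq R (-1 * RInt G uc 1) (- RInt G uc 1)). ring. }
  exists (RInt G uc 1). split.
  - apply defs_of_is_RInt.
    rewrite RInt_swapR in Hs2 by exact Hfex.
    replace (RInt G uc 1) with (RInt ftil (-1) c) by lra.
    apply (is_RInt_extR ftil); [|apply (@RInt_correct R_CompleteNormedModule); exact Hfex].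
    intros t Ht. rewrite Rmin_left in Ht by lra. rewrite Rmax_right in Ht by lra.
    unfold ftil. rewrite rho_pos by lra. rewrite rpow_pos by lra. reflexivity.
  - rewrite <- (RInt_Chasles G 0 uc 1) by apply HGex.
    change (plus (RInt G 0 uc) (RInt G uc 1)) with (RInt G 0 uc + RInt G uc 1).
    replace (RInt G uc 1 - (RInt G 0 uc + RInt G uc 1)) with (- RInt G 0 uc) by ring.
    rewrite Rabs_Ropp.
    apply Rle_lt_trans with ((uc - 0) * M).
    + apply RInt_bound; [lra|apply HGex|]. intros t Ht. apply HMb. lra.
    + apply (Rmult_lt_compat_r M) in Hucs; [|exact HM].
      replace (eps / M * M) with eps in Hucs by (field; lra). lra.
Qed.
Lemma eval_int (lam x kap a b : R) (N : nat) : 0 <= lam -> -1 < x ->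
  RInt (fun u => 2 * sqrt (1 + x) * rho lam ((1 + x) * (1 - u ^ 2)) *
          (kap * hyp2F1_term a b (lam + 1) ((1 + (x - (1 + x) * u ^ 2)) / 2) N)) 0 1
  = kap * sqrt (1 + x) * Rpower (1 + x) lam * Kf lam * hyp2F1_term a b (lam + 3/2) ((1 + x) / 2) N.
Proof.
  intros Hl Hx. set (h := 1 + x). assert (Hh : 0 < h) by (unfold h; lra).
  set (C := fun k => kap * sqrt h * Rpower h lam * Fco a b (lam + 1) k * (h / 2) ^ k).
  rewrite (RInt_extR _ (fun u => sum_f_R0 (fun k => C k * gK (lam + INR k) u) N)).
  2:{ intros u Hu. rewrite Rmin_left in Hu by lra. rewrite Rmax_right in Hu by lra.
      assert (Hy : 0 <= 1 - u ^ 2) by nra.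
      rewrite rho_scale by assumption.
      replace ((1 + (x - h * u ^ 2)) / 2) with (h / 2 * (1 - u ^ 2)) by (unfold h; field).
      unfold hyp2F1_term. rewrite !scal_sum. apply sum_eq. intros k _.
      unfold C, gK. rewrite <- rho_mul_pow by assumption. rewrite Rpow_mult_distr. unfold Fco. ring. }
  assert (Hex : forall k, ex_RInt (fun u => C k * gK (lam + INR k) u) 0 1).
  { intros k. apply ex_RInt_scalR. apply gK_ex. pose proof (pos_INR k). lra. }
  destruct (RInt_sum (fun k u => C k * gK (lam + INR k) u) 0 1 N Hex) as [_ ->].
  unfold hyp2F1_term. rewrite scal_sum. apply sum_eq. intros k _.
  rewrite RInt_scalR by (apply gK_ex; pose proof (pos_INR k); lra).
  fold (Kf (lam + INR k)).
  pose proof (Kf_poch lam k Hl) as KP.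
  pose proof (poch_pos (lam + 3/2) k ltac:(lra)). pose proof (poch_pos (lam + 1) k ltac:(lra)).
  pose proof (fact_pos k).
  assert (E : Kf (lam + INR k) = Kf lam * poch (lam + 1) k / poch (lam + 3/2) k) by (rewrite <- KP; field; lra).
  rewrite E. unfold C, Fco. field. repeat split; lra.
Qed.
Theorem proposition3p1 (lam : R) (n : nat) (x : R) :
  0 <= lam -> -1 <= x <= 1 ->
  Iplus lam (gegenbauer (lam + 1/2) n) x
    (c_const n lam * ((lam + 1/2) / (lam + INR n + 1/2)) * (1 + x)
       * hyp2F1_term (- INR n) (INR n + 2 * lam + 1) (lam + 1/2) ((1 - x) / 2) n)
  /\
  Iminus lam (gegenbauer (lam + 1/2) n) x
    (c_const n lam * (1 - x)
       * hyp2F1_term (- INR n) (INR n + 2 * lam + 1) (lam + 3/2) ((1 - x) / 2) n).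
Proof.
  intros Hl Hx.
  set (d := poch (2 * lam + 1) n / INR (Factorial.fact n)).
  assert (Hc : c_const n lam = d * Kf lam).
  { unfold c_const, d. rewrite Gamma_ratio by exact Hl.
    pose proof (sqrt_lt_R0 PI PI_RGT_0). pose proof (fact_pos n). field. split; lra. }
  set (P := fun t => d * hyp2F1_term (- INR n) (INR n + 2 * lam + 1) (lam + 1) ((1 + t) / 2) n).
  assert (HPneg : forall t, gegenbauer (lam + 1/2) n (- t) = P t).
  { intros t. rewrite geg_hyp by lra. unfold P, d.
    replace (2 * (lam + 1/2)) with (2 * lam + 1) by field.
    replace (INR n + (2 * lam + 1)) with (INR n + 2 * lam + 1) by ring.
    replace (lam + 1/2 + 1/2) with (lam + 1) by field.
    replace ((1 - - t) / 2) with ((1 + t) / 2) by field. reflexivity. }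
  assert (HPpos : forall t, gegenbauer (lam + 1/2) n t = (-1) ^ n * P t).
  { intros t. pose proof (geg_neg (lam + 1/2) n (- t)) as E. rewrite Ropp_involutive in E.
    rewrite E, HPneg. reflexivity. }
  split.
  - destruct (Req_EM_T x (-1)) as [Hxe|Hxne].
    + subst x. exists 0. split; [left; split; reflexivity|]. replace (1 + -1) with 0 by ring. ring.
    + assert (Hx' : -1 < x) by lra.
      eexists. split.
      * apply core; [exact Hl|exact Hx'|intros; apply geg_cont].
      * rewrite (RInt_extR _ (fun u => 2 * sqrt (1 + x) * rho lam ((1 + x) * (1 - u ^ 2)) *
            (((-1) ^ n * d) * hyp2F1_term (- INR n) (INR n + 2 * lam + 1) (lam + 1) ((1 + (x - (1 + x) * u ^ 2)) / 2) n))).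
        2:{ intros u _. rewrite HPpos. unfold P. ring. }
        rewrite eval_int by assumption.
        rewrite rpow_pos by lra.
        pose proof (hyp_refl n lam ((1 - x) / 2) Hl) as Rf.
        replace (1 - (1 - x) / 2) with ((1 + x) / 2) in Rf by field.
        assert (Hpw : Rpower (1 + x) (- lam + 1/2) * sqrt (1 + x) * Rpower (1 + x) lam = 1 + x).
        { rewrite <- Rpower_sqrt by lra. rewrite <- !Rpower_plus.
          replace (- lam + 1/2 + / 2 + lam) with 1 by field. apply Rpower_1; lra. }
        rewrite Hc.
        transitivity ((Rpower (1 + x) (- lam + 1/2) * sqrt (1 + x) * Rpower (1 + x) lam) * d * Kf lam *
          ((-1) ^ n * hyp2F1_term (- INR n) (INR n + 2 * lam + 1) (lam + 3/2) ((1 + x) / 2) n)); [ring|].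
        rewrite Hpw, Rf. ring.
  - destruct (Req_EM_T x 1) as [Hxe|Hxne].
    + subst x. exists 0. split; [left; split; reflexivity|]. replace (1 - 1) with 0 by ring. ring.
    + assert (Hx' : -1 < - x) by lra.
      assert (Hpc : forall t, continuous (fun t => gegenbauer (lam + 1/2) n (- t)) t).
      { intros t. apply (cR_comp (fun t => - t) (gegenbauer (lam + 1/2) n)); [apply cR_der; auto_derive; exact I|apply geg_cont]. }
      pose proof (core lam (- x) (fun t => gegenbauer (lam + 1/2) n (- t)) Hl Hx' Hpc) as Hc0.
      eexists. split.
      * apply refl_left. cbv beta.
        replace (fun t => / sqrt (- t - x) * rpow (1 - - t) lam * gegenbauer (lam + 1/2) n (- t))
          with (fun t => / sqrt (- x - t) * rpow (1 + t) lam * gegenbauer (lam + 1/2) n (- t)).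
        -- exact Hc0.
        -- apply functional_extensionality. intros t.
           replace (- x - t) with (- t - x) by ring. replace (1 + t) with (1 - - t) by ring. reflexivity.
      * rewrite (RInt_extR _ (fun u => 2 * sqrt (1 + - x) * rho lam ((1 + - x) * (1 - u ^ 2)) *
            (d * hyp2F1_term (- INR n) (INR n + 2 * lam + 1) (lam + 1) ((1 + (- x - (1 + - x) * u ^ 2)) / 2) n))).
        2:{ intros u _. rewrite HPneg. unfold P. reflexivity. }
        rewrite eval_int by assumption.
        replace (1 + - x) with (1 - x) by ring.
        rewrite rpow_pos by lra.
        assert (Hpw : Rpower (1 - x) (- lam + 1/2) * sqrt (1 - x) * Rpower (1 - x) lam = 1 - x).
        { rewrite <- Rpower_sqrt by lra. rewrite <- !Rpower_plus.
          replace (- lam + 1/2 + / 2 + lam) with 1 by field. apply Rpower_1; lra. }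
        rewrite Hc.
        transitivity ((Rpower (1 - x) (- lam + 1/2) * sqrt (1 - x) * Rpower (1 - x) lam) * d * Kf lam *
          hyp2F1_term (- INR n) (INR n + 2 * lam + 1) (lam + 3/2) ((1 - x) / 2) n); [ring|].
        rewrite Hpw. ring.
Qed.
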